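(* Let $H$ be a separable Hilbert space with orthonormal basis $\{e_n:n=0,1,2,\ldots\}$. For $n\geq 0$ let $L_n=\mathrm{Span}\{e_k:0\leq k\leq n\}$ and put $L_{-1}=\{0\}$. Let \[ H_{\mathrm{ra}}=\{x\in H: \sup_{n\geq 0} n^k d(x,L_{n-1})<\infty \text{ for all } k=0,1,2,\ldots\}, \] where $0^0=1$ and $d(x,L_{n-1})$ is the distance from $x$ to $L_{n-1}$. For $k\geq 0$ define $q_k(x)=\sup_{n\geq 0} n^k d(x,L_{n-1})$ for $x\in H_{\mathrm{ra}}$. Then $\{q_k:k=0,1,2,\ldots\}$ is a separating family of seminorms on $H_{\mathrm{ra}}$ inducing a Fréchet topology on $H_{\mathrm{ra}}$. Moreover, $x=\sum_{n=0}^\infty a_n(x)e_n\in H$ lies in $H_{\mathrm{ra}}$ if and only if $(a_n(x))_{n\geq 0}\in(s)$, and the map $x\mapsto (a_n(x))_{n\geq 0}$ is a topological isomorphism between the Fréchet spaces $H_{\mathrm{ra}}$ and $(s)$.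
   Context: $(s)$ denotes the space of rapidly decreasing sequences, i.e. complex sequences $(a_n)_{n\geq 0}$ with $\sup_n n^k|a_n|<\infty$ for all $k\geq 0$, with the Fréchet topology induced by the seminorms $(a_n)\mapsto\sup_n n^k|a_n|$, $k=0,1,2,\ldots$. *)

(* Defs.v *)
From mathcomp Require Import all_boot all_order all_algebra.
From mathcomp Require Import all_classical all_reals.
From mathcomp Require Import complex.

Set Implicit Arguments.
Unset Strict Implicit.
Unset Printing Implicit Defensive.

Import Order.TTheory GRing.Theory Num.Theory.
Local Open Scope ring_scope.
Local Open Scope classical_set_scope.

Section Defs.
Variable R : realType.
Local Notation C := R[i].

Definition cabs (z : C) : R := Normc.normc z.

Section Hilbert.
Variable H : lmodType C.
Variable ip : H -> H -> C.   (* inner product, linear in the first argument *)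

Definition is_inner_product : Prop :=
  [/\ (forall (a : C) (x y z : H), ip (a *: x + y) z = a * ip x z + ip y z),
      (forall x y : H, ip y x = conjc (ip x y)),
      (forall x : H, 0 <= complex.Re (ip x x)) &
      (forall x : H, ip x x = 0 -> x = 0)].

Definition hnorm (x : H) : R := Num.sqrt (complex.Re (ip x x)).

Definition hcomplete : Prop :=
  forall u : nat -> H,
    (forall eps : R, 0 < eps -> exists N : nat, forall m n : nat,
        (N <= m)%N -> (N <= n)%N -> hnorm (u m - u n) < eps) ->
    exists l : H, forall eps : R, 0 < eps -> exists N : nat, forall n : nat,
        (N <= n)%N -> hnorm (u n - l) < eps.

Definition is_hilbert : Prop := is_inner_product /\ hcomplete.

Definition orthonormal_basis (e : nat -> H) : Prop :=
  (forall i j : nat, ip (e i) (e j) = (i == j)%:R) /\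
  (forall x : H, (forall n : nat, ip x (e n) = 0) -> x = 0).

Variable e : nat -> H.

(* Lspan n = Span{e_k : 0 <= k <= n-1} = L_{n-1}; Lspan 0 = {0} = L_{-1} *)
Definition Lspan (n : nat) : set H :=
  [set x | exists c : nat -> C, x = \sum_(k < n) c k *: e k].

Definition distL (x : H) (n : nat) : R :=
  inf [set hnorm (x - y) | y in Lspan n].

(* n^k as a real number; 0^0 = 1 *)
Definition wt (n k : nat) : R := (n%:R : R) ^+ k.

Definition H_ra : set H :=
  [set x | forall k : nat, has_ubound (range (fun n : nat => wt n k * distL x n))].

Definition q (k : nat) (x : H) : R :=
  sup (range (fun n : nat => wt n k * distL x n)).

Definition coef (x : H) : nat -> C := fun n => ip x (e n).

End Hilbert.

Definition s_space : set (nat -> C) :=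
  [set a | forall k : nat, has_ubound (range (fun n : nat => wt n k * cabs (a n)))].

Definition s_norm (k : nat) (a : nat -> C) : R :=
  sup (range (fun n : nat => wt n k * cabs (a n))).

Section Seminorms.
Variable V : lmodType C.
Variable S : set V.              (* the carrier (a linear subspace of V) *)
Variable p : nat -> V -> R.

Definition subspace : Prop :=
  S 0 /\ (forall (a : C) (x y : V), S x -> S y -> S (a *: x + y)).

Definition seminorm_on (r : V -> R) : Prop :=
  [/\ (forall x, S x -> 0 <= r x),
      (forall x y, S x -> S y -> r (x + y) <= r x + r y) &
      (forall (a : C) x, S x -> r (a *: x) = cabs a * r x)].

Definition separating : Prop :=
  forall x, S x -> (forall k, p k x = 0) -> x = 0.

Definition sn_open (U : set V) : Prop :=
  U `<=` S /\
  forall x, U x -> exists (k : nat) (eps : R), 0 < eps /\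
    [set y | S y /\ forall j : nat, (j <= k)%N -> p j (y - x) < eps] `<=` U.

Definition sn_complete : Prop :=
  forall u : nat -> V, (forall n, S (u n)) ->
    (forall (k : nat) (eps : R), 0 < eps -> exists N : nat, forall m n : nat,
        (N <= m)%N -> (N <= n)%N -> p k (u m - u n) < eps) ->
    exists2 l : V, S l & forall (k : nat) (eps : R), 0 < eps ->
        exists N : nat, forall n : nat, (N <= n)%N -> p k (u n - l) < eps.

Definition frechet_seminorms : Prop :=
  [/\ subspace, (forall k, seminorm_on (p k)), separating & sn_complete].

End Seminorms.

Definition sn_continuous (V W : lmodType C) (S : set V) (p : nat -> V -> R)
  (S' : set W) (p' : nat -> W -> R) (f : V -> W) : Prop :=
  forall U : set W, sn_open S' p' U -> sn_open S p [set x | S x /\ U (f x)].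

Definition top_iso (V W : lmodType C) (S : set V) (p : nat -> V -> R)
  (S' : set W) (p' : nat -> W -> R) (f : V -> W) : Prop :=
  [/\ (forall x, S x -> S' (f x)),
      (forall (a : C) x y, S x -> S y -> f (a *: x + y) = a *: f x + f y),
      sn_continuous S p S' p' f &
      exists g : W -> V,
        [/\ (forall y, S' y -> S (g y)),
            (forall x, S x -> g (f x) = x),
            (forall y, S' y -> f (g y) = y) &
            sn_continuous S' p' S p g]].

End Defs.

(* Main.v *)
Require Import Defs.
From mathcomp Require Import all_boot all_order all_algebra.
From mathcomp Require Import all_classical all_reals.
From mathcomp Require Import complex.
From mathcomp Require Import ring lra.
From Stdlib Require Import ClassicalEpsilon.
Set Implicit Arguments.
Unset Strict Implicit.
Unset Printing Implicit Defensive.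
Import Order.TTheory GRing.Theory Num.Theory.
Local Open Scope ring_scope.
Local Open Scope classical_set_scope.

Lemma cabsN1 (R : realType) : cabs (-1 : R[i]) = 1.
Proof. by rewrite /cabs /= oppr0 expr0n /= addr0 sqrrN expr1n sqrtr1. Qed.
Lemma cabs0 (R : realType) : cabs (0 : R[i]) = 0.
Proof. by rewrite /cabs /= expr0n /= addr0 sqrtr0. Qed.

Lemma cabsV (R : realType) (u : R[i]) : cabs u^-1 = (cabs u)^-1.
Proof. exact: Normc.normcV. Qed.
Lemma cabs_eq0 (R : realType) (u : R[i]) : cabs u = 0 -> u = 0.
Proof. exact: Normc.eq0_normc. Qed.

Section Basics.
Variable R : realType.
Local Notation C := R[i].
Variable H : lmodType C.
Variable ip : H -> H -> C.
Hypothesis Hip : is_inner_product ip.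

Lemma ipDl a x y z : ip (a *: x + y) z = a * ip x z + ip y z.
Proof. by case: Hip => h _ _ _; apply: h. Qed.
Lemma ip_sym x y : ip y x = conjc (ip x y).
Proof. by case: Hip => _ h _ _; apply: h. Qed.
Lemma ip_ge0 x : 0 <= complex.Re (ip x x).
Proof. by case: Hip => _ _ h _; apply: h. Qed.
Lemma ip_def x : ip x x = 0 -> x = 0.
Proof. by case: Hip => _ _ _ h; apply: h. Qed.

Lemma ip0l z : ip 0 z = 0.
Proof.
have := ipDl 1 0 0 z; rewrite scale1r addr0 mul1r => h.
by apply: (addrI (ip 0 z)); rewrite addr0 -h.
Qed.
Lemma ipD x y z : ip (x + y) z = ip x z + ip y z.
Proof. by rewrite -[x]scale1r ipDl mul1r scale1r. Qed.
Lemma ipZ a x z : ip (a *: x) z = a * ip x z.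
Proof. by rewrite -[a *: x]addr0 ipDl ip0l addr0. Qed.
Lemma ipN x z : ip (- x) z = - ip x z.
Proof. by rewrite -scaleN1r ipZ mulN1r. Qed.
Lemma ipB x y z : ip (x - y) z = ip x z - ip y z.
Proof. by rewrite ipD ipN. Qed.

Lemma cjD (u v : C) : conjc (u + v) = conjc u + conjc v.
Proof. by case: u; case: v => *; rewrite /= ?opprD. Qed.
Lemma cjM (u v : C) : conjc (u * v) = conjc u * conjc v.
Proof. case: u; case: v => a b c d /=; simpc; congr (_ +i* _)%C; ring. Qed.
Lemma cjN1 : conjc (-1 : C) = -1.
Proof. by rewrite /= oppr0. Qed.
Lemma cj_real (r : R) : conjc (r%:C%C) = r%:C%C.
Proof. by rewrite /= oppr0. Qed.

Lemma ipDr x y z : ip z (x + y) = ip z x + ip z y.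
Proof. by rewrite ip_sym ipD cjD -!ip_sym. Qed.
Lemma ipZr a x z : ip z (a *: x) = conjc a * ip z x.
Proof. by rewrite ip_sym ipZ cjM -ip_sym. Qed.
Lemma ip0r z : ip z 0 = 0.
Proof. by rewrite ip_sym ip0l /= oppr0. Qed.
Lemma ipNr x z : ip z (- x) = - ip z x.
Proof. by rewrite -scaleN1r ipZr cjN1 mulN1r. Qed.
Lemma ipBr x y z : ip z (x - y) = ip z x - ip z y.
Proof. by rewrite ipDr ipNr. Qed.

Definition N2 x := complex.Re (ip x x).

Lemma ipxx x : ip x x = (N2 x)%:C%C.
Proof.
rewrite /N2; have := ip_sym x x; case: (ip x x) => a b /= h.
have hb : b = - b by case: h.
congr (_ +i* _)%C; lra.
Qed.

Lemma N2_ge0 x : 0 <= N2 x. Proof. exact: ip_ge0. Qed.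
Lemma N2_eq0 x : N2 x = 0 -> x = 0.
Proof. by move=> h; apply: ip_def; rewrite ipxx h. Qed.

Lemma Re_add (u v : C) : complex.Re (u + v) = complex.Re u + complex.Re v.
Proof. by case: u; case: v. Qed.
Lemma Re_real (r : R) : complex.Re (r%:C%C) = r. Proof. by []. Qed.
Lemma Re_realM (r : R) (u : C) : complex.Re (r%:C%C * u) = r * complex.Re u.
Proof. by case: u => a b /=; rewrite mul0r subr0. Qed.
Lemma Re_conj (u : C) : complex.Re (conjc u) = complex.Re u.
Proof. by case: u. Qed.

Lemma N2_lin (al be : R) x y :
  N2 ((al%:C)%C *: x + (be%:C)%C *: y) =
  al ^+ 2 * N2 x + be ^+ 2 * N2 y + 2 * al * be * complex.Re (ip x y).
Proof.
rewrite /N2 ipD !ipDr !ipZ !ipZr !ipxx (ip_sym x y) !cj_real.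
rewrite !Re_add !mulrA -!rmorphM !Re_realM !Re_real Re_conj.
ring.
Qed.


Local Notation hn := (hnorm ip).

Lemma hnE x : hn x = Num.sqrt (N2 x). Proof. by []. Qed.
Lemma hn_ge0 x : 0 <= hn x. Proof. exact: sqrtr_ge0. Qed.
Lemma hn_sq x : hn x ^+ 2 = N2 x. Proof. by rewrite hnE sqr_sqrtr // N2_ge0. Qed.
Lemma hn_eq0 x : hn x = 0 -> x = 0.
Proof.
move=> h; apply: N2_eq0; have := hn_sq x; rewrite h expr0n /= => <-; done.
Qed.
Lemma hn0 : hn 0 = 0.
Proof. by rewrite hnE /N2 ip0l /= sqrtr0. Qed.

Lemma Re_CS x y : complex.Re (ip x y) <= hn x * hn y.
Proof.
have [hy|hy] := eqVneq (N2 y) 0.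
  by rewrite (N2_eq0 hy) ip0r mulr_ge0 // hn_ge0.
have ny : 0 < N2 y by rewrite lt_def hy N2_ge0.
set b := complex.Re (ip x y).
have h0 := N2_ge0 ((N2 y)%:C%C *: x + ((- b)%:C)%C *: y).
rewrite N2_lin in h0.
have hX := hn_sq x; have hY := hn_sq y.
have hx0 := hn_ge0 x; have hy0 := hn_ge0 y.
have h1 : b ^+ 2 <= N2 x * N2 y by nra.
have h2 : 0 <= hn x * hn y by apply: mulr_ge0.
have h3 : b ^+ 2 <= (hn x * hn y) ^+ 2 by rewrite exprMn hX hY.
nra.
Qed.

Lemma one_real : ((1 : R)%:C)%C = (1 : C). Proof. by []. Qed.

Lemma hnD x y : hn (x + y) <= hn x + hn y.
Proof.
have h := N2_lin 1 1 x y; rewrite one_real !scale1r in h.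
have hX := hn_sq x; have hY := hn_sq y; have hC := Re_CS x y.
have hx0 := hn_ge0 x; have hy0 := hn_ge0 y.
have h1 : N2 (x + y) <= (hn x + hn y) ^+ 2 by rewrite h; nra.
rewrite hnE -(ger0_norm (addr_ge0 hx0 hy0)) -sqrtr_sqr ler_sqrt //.
exact: sqr_ge0.
Qed.

Lemma cabs_ge0 (u : C) : 0 <= cabs u.
Proof. by case: u => a b; exact: sqrtr_ge0. Qed.
Lemma cabs_sq (u : C) : u * conjc u = ((cabs u ^+ 2)%:C)%C.
Proof.
case: u => a b; rewrite /cabs /= sqr_sqrtr ?addr_ge0 ?sqr_ge0 //.
simpc; congr (_ +i* _)%C; ring.
Qed.
Lemma cabs_sqC (u : C) : conjc u * u = ((cabs u ^+ 2)%:C)%C.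
Proof. by rewrite mulrC cabs_sq. Qed.

Lemma N2Z a x : N2 (a *: x) = cabs a ^+ 2 * N2 x.
Proof. by rewrite /N2 ipZ ipZr mulrA cabs_sq ipxx -rmorphM. Qed.

Lemma hnZ a x : hn (a *: x) = cabs a * hn x.
Proof.
rewrite !hnE N2Z sqrtrM ?sqr_ge0 // sqrtr_sqr ger0_norm //; exact: cabs_ge0.
Qed.

Lemma hnN x : hn (- x) = hn x.
Proof.
by rewrite -scaleN1r hnZ cabsN1 mul1r.
Qed.
Lemma hnB x y : hn (x - y) = hn (y - x).
Proof. by rewrite -hnN opprB. Qed.

Lemma CS x y : cabs (ip x y) <= hn x * hn y.
Proof.
set c := ip x y.
have h := Re_CS x (c *: y); rewrite ipZr cabs_sqC Re_real hnZ in h.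
have hP : 0 <= hn x * hn y by apply: mulr_ge0; apply: hn_ge0.
have ha := cabs_ge0 c.
have h' : cabs c * cabs c <= cabs c * (hn x * hn y).
  by rewrite -expr2 (le_trans h) // mulrCA.
have [->|hpos] := eqVneq (cabs c) 0; first by [].
have hp : 0 < cabs c by rewrite lt_def hpos ha.
by rewrite -(ler_pM2l hp).
Qed.

End Basics.

Section Span.
Variable R : realType.
Local Notation C := R[i].
Variable H : lmodType C.
Variable ip : H -> H -> C.
Hypothesis Hip : is_inner_product ip.
Variable e : nat -> H.
Hypothesis Hon : orthonormal_basis ip e.
Local Notation hn := (hnorm ip).
Local Notation dist := (distL ip e).

Lemma ip_ee i j : ip (e i) (e j) = (i == j)%:R.
Proof. by case: Hon. Qed.
Lemma ob_complete x : (forall n, ip x (e n) = 0) -> x = 0.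
Proof. by case: Hon => _; apply. Qed.

Lemma hn_e n : hn (e n) = 1.
Proof. by rewrite hnE /N2 ip_ee eqxx /= sqrtr1. Qed.

Lemma ip_suml (N : nat) (F : 'I_N -> H) z :
  ip (\sum_(k < N) F k) z = \sum_(k < N) ip (F k) z.
Proof.
apply: (big_morph (fun x => ip x z)); first by move=> a b; apply: (ipD Hip).
exact: (ip0l Hip).
Qed.

Lemma ip_span_coef (N : nat) (c : nat -> C) n :
  ip (\sum_(k < N) c k *: e k) (e n) = if (n < N)%N then c n else 0.
Proof.
rewrite ip_suml.
under eq_bigr => k _ do rewrite (ipZ Hip) ip_ee.
case: ifP => hn.
  rewrite (bigD1 (Ordinal hn)) //= eqxx mulr1 big1 ?addr0 // => k hk.
  have -> : (k == n :> nat) = false.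
    by apply/negbTE; apply: contra hk => /eqP hk; apply/eqP/val_inj.
  by rewrite mulr0.
rewrite big1 // => k _.
have -> : (k == n :> nat) = false.
  by apply/negbTE; apply/eqP => hk; move: (ltn_ord k); rewrite hk hn.
by rewrite mulr0.
Qed.

Lemma Lspan0 n : Lspan e n 0.
Proof. by exists (fun _ => 0); rewrite big1 // => k _; rewrite scale0r. Qed.

Lemma LspanD n y z : Lspan e n y -> Lspan e n z -> Lspan e n (y + z).
Proof.
move=> [c ->] [d ->]; exists (fun k => c k + d k).
by rewrite -big_split /=; apply: eq_bigr => k _; rewrite scalerDl.
Qed.

Lemma LspanZ n a y : Lspan e n y -> Lspan e n (a *: y).
Proof.
move=> [c ->]; exists (fun k => a * c k).
by rewrite scaler_sumr; apply: eq_bigr => k _; rewrite scalerA.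
Qed.

Lemma LspanN n y : Lspan e n y -> Lspan e n (- y).
Proof. by move=> h; rewrite -scaleN1r; apply: LspanZ. Qed.

Lemma ip_span_e n y : Lspan e n y -> ip y (e n) = 0.
Proof. by move=> [c ->]; rewrite ip_span_coef ltnn. Qed.

Lemma dist_le x n y : Lspan e n y -> dist x n <= hn (x - y).
Proof.
move=> hy; apply: ge_inf; last by exists y.
by exists 0 => r [z _ <-]; apply: hn_ge0.
Qed.

Lemma dist_ge x n lb : (forall y, Lspan e n y -> lb <= hn (x - y)) -> lb <= dist x n.
Proof.
move=> h; apply: lb_le_inf; first by exists (hn (x - 0)), 0; first exact: Lspan0.
by move=> r [y hy <-]; apply: h.
Qed.

Lemma dist_ge0 x n : 0 <= dist x n.
Proof. by apply: dist_ge => y _; apply: hn_ge0. Qed.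

Lemma dist_le_hn x n : dist x n <= hn x.
Proof. by rewrite -[x in hn x]subr0; apply: dist_le; apply: Lspan0. Qed.

Lemma dist0 x : dist x 0 = hn x.
Proof.
apply/eqP; rewrite eq_le dist_le_hn /=; apply: dist_ge => y [c ->].
by rewrite big_ord0 subr0.
Qed.

Lemma coef_le_dist x n : cabs (ip x (e n)) <= dist x n.
Proof.
apply: dist_ge => y hy.
have -> : ip x (e n) = ip (x - y) (e n) by rewrite (ipB Hip) (ip_span_e hy) subr0.
by have := CS Hip (x - y) (e n); rewrite hn_e // mulr1.
Qed.

Lemma distD x y n : dist (x + y) n <= dist x n + dist y n.
Proof.
rewrite -lerBlDr; apply: (@dist_ge x n (dist (x + y) n - dist y n)) => v hv.
rewrite lerBlDr [leRHS]addrC -lerBlDr.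
apply: (@dist_ge y n (dist (x + y) n - hn (x - v))) => u hu.
rewrite lerBlDr; apply: le_trans (dist_le _ (LspanD hv hu)) _.
rewrite (_ : x + y - (v + u) = (x - v) + (y - u)); last first.
  by rewrite opprD addrACA.
by rewrite addrC; exact: (hnD Hip).
Qed.

Lemma distZ_le a x n : dist (a *: x) n <= cabs a * dist x n.
Proof.
have [->|ha] := eqVneq a 0.
  rewrite scale0r cabs0 mul0r.
  by have := dist_le_hn 0 n; rewrite (hn0 Hip).
have hc : 0 < cabs a.
  rewrite lt_def cabs_ge0 andbT; apply: contra ha => /eqP h.
  by apply/eqP; apply: Normc.eq0_normc.
rewrite mulrC -ler_pdivrMr //.
apply: (@dist_ge x n (dist (a *: x) n / cabs a)) => y hy.
rewrite ler_pdivrMr // mulrC -(hnZ Hip) scalerBr.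
exact: dist_le (LspanZ _ hy).
Qed.

Lemma distN x n : dist (- x) n = dist x n.
Proof.
have c1 : cabs (-1 : C) = 1 by apply: cabsN1.
apply/eqP; rewrite eq_le; apply/andP; split.
  by have h := distZ_le (-1) x n; rewrite scaleN1r c1 mul1r in h.
by have h := distZ_le (-1) (- x) n; rewrite scaleN1r opprK c1 mul1r in h.
Qed.

Lemma distB x y n : dist (x - y) n <= dist x n + dist y n.
Proof. by rewrite -(distN y); apply: distD. Qed.

End Span.

Section SupW.
Variable R : realType.

Lemma supr_ub (f : nat -> R) n : has_ubound (range f) -> f n <= sup (range f).
Proof. by move=> hb; apply: ub_le_sup => //; exists n. Qed.

Lemma supr_le (f : nat -> R) M : (forall n, f n <= M) -> sup (range f) <= M.
Proof.
move=> h; apply: ge_sup; first by exists (f 0%N), 0%N.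
by move=> r [n _ <-].
Qed.

Lemma bnd_of_le (f : nat -> R) M : (forall n, f n <= M) -> has_ubound (range f).
Proof. by move=> h; exists M => r [n _ <-]. Qed.

Lemma supr_scale (f : nat -> R) c : 0 <= c -> has_ubound (range f) ->
  sup (range (fun n => c * f n)) = c * sup (range f).
Proof.
move=> hc hb; apply/eqP; rewrite eq_le; apply/andP; split.
  by apply: supr_le => n; rewrite ler_wpM2l // supr_ub.
have [->|cn0] := eqVneq c 0.
  by rewrite mul0r; apply: le_trans (supr_ub 0%N _); [rewrite mul0r|apply: (bnd_of_le (M := 0)) => n; rewrite mul0r].
have cp : 0 < c by rewrite lt_def cn0 hc.
have hb' : has_ubound (range (fun n => c * f n)).
  by apply: (bnd_of_le (M := c * sup (range f))) => n; rewrite ler_wpM2l // supr_ub.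
rewrite mulrC -ler_pdivlMr //; apply: supr_le => n.
by rewrite ler_pdivlMr // mulrC; apply: (supr_ub n hb').
Qed.

Lemma wt_ge0 n k : 0 <= wt R n k.
Proof. by rewrite /wt exprn_ge0 // ler0n. Qed.

Lemma wt00 : wt R 0 0 = 1.
Proof. by rewrite /wt expr0. Qed.

Lemma wt_mono n j k : (n <= j)%N -> wt R n k <= wt R j k.
Proof. by move=> h; rewrite /wt lerXn2r ?nnegrE ?ler0n // ler_nat. Qed.

Lemma wt_sq j k : (j.+1%:R) ^+ 2 * wt R j k = wt R j (k + 2) + 2 * wt R j (k + 1) + wt R j k.
Proof. by rewrite /wt !exprD -addn1 natrD; ring. Qed.

End SupW.


Section Sem.
Variable R : realType.
Local Notation C := R[i].
Variable H : lmodType C.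
Variable ip : H -> H -> C.
Hypothesis Hip : is_inner_product ip.
Variable e : nat -> H.
Hypothesis Hon : orthonormal_basis ip e.
Local Notation hn := (hnorm ip).
Local Notation dist := (distL ip e).
Local Notation S := (H_ra ip e).
Local Notation Q := (q ip e).

Lemma distZ a x n : dist (a *: x) n = cabs a * dist x n.
Proof.
apply/eqP; rewrite eq_le distZ_le //=.
have [->|ha] := eqVneq a 0.
  by rewrite cabs0 mul0r dist_ge0.
have h := distZ_le Hip e a^-1 (a *: x) n.
rewrite scalerA mulVf // scale1r cabsV in h.
have hc : 0 < cabs a.
  rewrite lt_def cabs_ge0 andbT; apply: contra ha => /eqP h'.
  by apply/eqP; apply: Normc.eq0_normc.
by rewrite -ler_pdivlMl // mulrC.
Qed.

Lemma Q_ub x k n : S x -> wt R n k * dist x n <= Q k x.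
Proof. by move=> hx; apply: (supr_ub (f := fun n => wt R n k * dist x n)); apply: hx. Qed.

Lemma Q_le x k M : (forall n, wt R n k * dist x n <= M) -> Q k x <= M.
Proof. by move=> h; apply: (supr_le (f := fun n => wt R n k * dist x n)). Qed.

Lemma S_of_bound x : (forall k, exists M, forall n, wt R n k * dist x n <= M) -> S x.
Proof. by move=> h k; have [M hM] := h k; apply: (bnd_of_le (M := M)). Qed.

Lemma hn_le_Q0 x : S x -> hn x <= Q 0 x.
Proof.
by move=> hx; have := Q_ub 0 0 hx; rewrite wt00 mul1r dist0.
Qed.

Lemma Q_ge0 x k : S x -> 0 <= Q k x.
Proof.
move=> hx; apply: le_trans (Q_ub k 0 hx).
by apply: mulr_ge0; [apply: wt_ge0|apply: dist_ge0].
Qed.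

Lemma S_lin a x y : S x -> S y -> S (a *: x + y).
Proof.
move=> hx hy; apply: S_of_bound => k; exists (cabs a * Q k x + Q k y) => n.
apply: le_trans (_ : wt R n k * (cabs a * dist x n + dist y n) <= _).
  rewrite ler_wpM2l ?wt_ge0 //; apply: le_trans (distD Hip e _ _ _) _.
  by rewrite distZ.
rewrite mulrDr mulrCA lerD ?Q_ub // ler_wpM2l ?cabs_ge0 // Q_ub //.
Qed.

Lemma S0 : S 0.
Proof.
apply: S_of_bound => k; exists 0 => n.
have := dist_le_hn ip e 0 n; rewrite (hn0 Hip) => h.
by rewrite mulr_ge0_le0 // wt_ge0.
Qed.

Lemma S_add x y : S x -> S y -> S (x + y).
Proof. by move=> hx hy; rewrite -[x]scale1r; apply: S_lin. Qed.
Lemma S_scale a x : S x -> S (a *: x).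
Proof. by move=> hx; rewrite -[_ *: _]addr0; apply: S_lin => //; apply: S0. Qed.
Lemma S_opp x : S x -> S (- x).
Proof. by move=> hx; rewrite -scaleN1r; apply: S_scale. Qed.
Lemma S_sub x y : S x -> S y -> S (x - y).
Proof. by move=> hx hy; apply: S_add => //; apply: S_opp. Qed.

Lemma Q_add k x y : S x -> S y -> Q k (x + y) <= Q k x + Q k y.
Proof.
move=> hx hy; apply: Q_le => n.
apply: le_trans (_ : wt R n k * (dist x n + dist y n) <= _).
  by rewrite ler_wpM2l ?wt_ge0 // distD.
by rewrite mulrDr lerD ?Q_ub.
Qed.

Lemma Q_scale k a x : S x -> Q k (a *: x) = cabs a * Q k x.
Proof.
move=> hx; rewrite /q.
rewrite -(supr_scale (cabs_ge0 a)); last by apply: hx.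
suff -> : (fun n => wt R n k * dist (a *: x) n) = (fun n => cabs a * (wt R n k * dist x n)) by [].
by apply: funext => n; rewrite distZ mulrCA.
Qed.

Lemma Q_sep x : S x -> (forall k, Q k x = 0) -> x = 0.
Proof.
move=> hx h; apply: (hn_eq0 Hip); apply/le_anti/andP; split.
  by rewrite -(h 0%N) hn_le_Q0.
exact: hn_ge0.
Qed.

End Sem.

Lemma sum_inv_sq (R : realType) N :
  \sum_(j < N) ((j.+1%:R : R) ^+ 2)^-1 <= 2 - 2 / (N.+1)%:R.
Proof.
elim: N => [|N IH]; first by rewrite big_ord0 divr1 subrr.
rewrite big_ord_recr /=.
apply: le_trans (lerD IH (lexx _)) _.
set x : R := (N.+1)%:R.
have hx : 1 <= x by rewrite ler1n.
have x0 : 0 < x by apply: lt_le_trans hx.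
have -> : ((N.+2)%:R : R) = x + 1 by rewrite /x -natr1.
rewrite -subr_ge0.
have -> : 2 - 2 / (x + 1) - (2 - 2 / x + (x ^+ 2)^-1) = (x - 1) / (x ^+ 2 * (x + 1)).
  have hN : (0 : R) <= N%:R by apply: ler0n.
  by field; apply/andP; split; apply: lt0r_neq0; lra.
apply: divr_ge0; first lra.
by apply: mulr_ge0; [apply: sqr_ge0|lra].
Qed.

Section Series.
Variable R : realType.
Local Notation C := R[i].
Variable H : lmodType C.
Variable ip : H -> H -> C.
Hypothesis Hip : is_inner_product ip.
Variable e : nat -> H.
Hypothesis Hon : orthonormal_basis ip e.
Hypothesis Hcomp : hcomplete ip.
Local Notation hn := (hnorm ip).
Local Notation dist := (distL ip e).
Local Notation S := (H_ra ip e).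
Local Notation Q := (q ip e).
Local Notation Ss := (@s_space R).
Local Notation sn := (@s_norm R).

Lemma sn_ub a m j : Ss a -> wt R j m * cabs (a j) <= sn m a.
Proof. by move=> ha; apply: (supr_ub (f := fun n => wt R n m * cabs (a n))); apply: ha. Qed.

Lemma sn_ge0 a m : Ss a -> 0 <= sn m a.
Proof.
move=> ha; apply: le_trans (sn_ub m 0 ha).
by apply: mulr_ge0; [apply: wt_ge0|apply: cabs_ge0].
Qed.

Definition Bk (a : nat -> C) k := sn k a + 2 * sn (k + 1)%N a + sn (k + 2)%N a.

Lemma Bk_ge0 a k : Ss a -> 0 <= Bk a k.
Proof. by move=> ha; rewrite /Bk !addr_ge0 ?mulr_ge0 ?sn_ge0. Qed.

Lemma coef_bnd a k j : Ss a -> wt R j k * cabs (a j) <= Bk a k / (j.+1%:R) ^+ 2.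
Proof.
move=> ha; have hj : (0 : R) < (j.+1%:R) ^+ 2 by rewrite exprn_gt0 // ltr0n.
rewrite ler_pdivlMr //.
have -> : wt R j k * cabs (a j) * j.+1%:R ^+ 2 =
   wt R j (k + 2) * cabs (a j) + 2 * (wt R j (k + 1) * cabs (a j)) + wt R j k * cabs (a j).
  transitivity (cabs (a j) * (j.+1%:R ^+ 2 * wt R j k)); first by ring.
  by rewrite wt_sq; ring.
have := sn_ub k j ha; have := sn_ub (k + 1)%N j ha; have := sn_ub (k + 2)%N j ha.
rewrite /Bk; lra.
Qed.

Lemma tail_bnd a k n N : Ss a -> (n <= N)%N ->
  wt R n k * \sum_(n <= j < N) cabs (a j) <= 2 * Bk a k.
Proof.
move=> ha hnN; rewrite mulr_sumr.
apply: le_trans (_ : \sum_(n <= j < N) Bk a k / (j.+1%:R) ^+ 2 <= _).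
  apply: ler_sum_nat => j /andP[hj _].
  apply: le_trans (coef_bnd k j ha).
  by rewrite ler_wpM2r ?cabs_ge0 // wt_mono.
apply: le_trans (_ : \sum_(0 <= j < N) Bk a k / (j.+1%:R) ^+ 2 <= _).
  rewrite (big_cat_nat (leq0n n) hnN) /= lerDr.
  by apply: sumr_ge0 => j _; apply: divr_ge0; [apply: Bk_ge0|apply: sqr_ge0].
rewrite big_mkord -mulr_sumr mulrC ler_wpM2r ?Bk_ge0 //.
apply: le_trans (sum_inv_sq R N) _.
by rewrite gerBl divr_ge0.
Qed.

Definition P (a : nat -> C) N := \sum_(k < N) a k *: e k.

Lemma P_span a N : Lspan e N (P a N).
Proof. by exists a. Qed.

Lemma P_diff a n N : (n <= N)%N -> P a N - P a n = \sum_(n <= j < N) a j *: e j.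
Proof.
move=> h; rewrite /P -!(big_mkord xpredT (fun j => a j *: e j)).
by rewrite (big_cat_nat (leq0n n) h) /= addrAC subrr add0r.
Qed.

Lemma hn_sum a n N : hn (\sum_(n <= j < N) a j *: e j) <= \sum_(n <= j < N) cabs (a j).
Proof.
apply: (big_ind2 (fun u r => hn u <= r)).
- by rewrite (hn0 Hip).
- move=> u r v t h1 h2; apply: le_trans (hnD Hip u v) _; exact: lerD.
- by move=> j _; rewrite (hnZ Hip) (hn_e Hon) mulr1.
Qed.

Lemma P_tail a k n N : Ss a -> (n <= N)%N -> wt R n k * hn (P a N - P a n) <= 2 * Bk a k.
Proof.
move=> ha h; apply: le_trans (tail_bnd k ha h).
by rewrite ler_wpM2l ?wt_ge0 // P_diff // hn_sum.
Qed.

Lemma P_cauchy a : Ss a -> forall eps : R, 0 < eps -> exists N : nat, forall m n : nat,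
  (N <= m)%N -> (N <= n)%N -> hn (P a m - P a n) < eps.
Proof.
move=> ha eps he.
set B := 2 * Bk a 1.
have hB : 0 <= B by rewrite mulr_ge0 // Bk_ge0.
exists (Num.bound (B / eps)).+1 => m n hm hn'.
have key : forall m n : nat, ((Num.bound (B / eps)).+1 <= n)%N -> (n <= m)%N -> hn (P a m - P a n) < eps.
  move=> m' n' hn1 hnm.
  have h1 := P_tail 1 ha hnm; rewrite /wt expr1 in h1.
  have h2 : B / eps < (Num.bound (B / eps))%:R by apply: archi_boundP; rewrite divr_ge0 // ltW.
  have h3 : ((Num.bound (B / eps))%:R : R) <= n'%:R by rewrite ler_nat ltnW.
  have h4 : B < n'%:R * eps by rewrite -ltr_pdivrMr //; apply: lt_le_trans h2 h3.
  have h5 := hn_ge0 ip (P a m' - P a n').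
  have h6 : (0 : R) <= n'%:R by apply: ler0n.
  rewrite -/B in h1.
  nra.
have [hnm|hmn] := leqP n m; first exact: key.
by rewrite (hnB Hip); apply: key => //; apply: ltnW.
Qed.

Definition lim_of (a : nat -> C) (l : H) := forall eps : R, 0 < eps -> exists N : nat,
  forall n : nat, (N <= n)%N -> hn (P a n - l) < eps.

Definition g (a : nat -> C) : H := epsilon (inhabits 0) (lim_of a).

Lemma g_spec a : Ss a -> lim_of a (g a).
Proof.
move=> ha; apply: epsilon_spec.
have [l hl] := Hcomp (P_cauchy ha); by exists l.
Qed.

Lemma small_eq0 (d : C) : (forall eps : R, 0 < eps -> cabs d < eps) -> d = 0.
Proof.
move=> h; apply: cabs_eq0; apply/le_anti/andP; split; last exact: cabs_ge0.
apply/ler_addgt0Pr => eps he; rewrite add0r; exact: ltW (h eps he).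
Qed.

Lemma coef_g a n : Ss a -> ip (g a) (e n) = a n.
Proof.
move=> ha; apply/eqP; rewrite -subr_eq0; apply/eqP; apply: small_eq0 => eps he.
have [N hN] := g_spec ha he.
set M := maxn N n.+1.
have h1 : ip (P a M) (e n) = a n by rewrite /P (ip_span_coef Hip Hon) leq_max ltnSn orbT.
rewrite -{1}h1 -(ipB Hip).
apply: le_lt_trans (CS Hip _ _) _; rewrite (hn_e Hon) mulr1 (hnB Hip).
by apply: hN; rewrite leq_max leqnn.
Qed.

Lemma g_coef x : Ss (coef ip e x) -> g (coef ip e x) = x.
Proof.
move=> ha; apply/eqP; rewrite -subr_eq0; apply/eqP; apply: (ob_complete Hon) => n.
by rewrite (ipB Hip) coef_g // subrr.
Qed.

Lemma main_bnd x k n : Ss (coef ip e x) -> wt R n k * dist x n <= 2 * Bk (coef ip e x) k.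
Proof.
move=> ha; set a := coef ip e x.
have hw := wt_ge0 R n k.
apply: le_trans (_ : wt R n k * hn (g a - P a n) <= _).
  rewrite ler_wpM2l // g_coef //; exact: dist_le (P_span a n).
apply/ler_addgt0Pr => eps he.
have he' : 0 < eps / (wt R n k + 1) by rewrite divr_gt0 // ltr_wpDl.
have [N0 hN0] := g_spec ha he'.
set N := maxn N0 n.
have h1 := hN0 N (leq_maxl _ _).
have h2 := P_tail k ha (leq_maxr N0 n : (n <= N)%N).
have h3 : hn (g a - P a n) <= hn (P a N - g a) + hn (P a N - P a n).
  rewrite (hnB Hip (P a N)).
  by have := hnD Hip (g a - P a N) (P a N - P a n); rewrite addrA subrK.
have h4 : wt R n k * hn (P a N - g a) <= eps.
  apply: le_trans (_ : wt R n k * (eps / (wt R n k + 1)) <= _).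
    by rewrite ler_wpM2l // ltW.
  rewrite mulrA ler_pdivrMr ?ltr_wpDl // mulrC ler_wpM2l ?ltW //; lra.
apply: le_trans (_ : wt R n k * (hn (P a N - g a) + hn (P a N - P a n)) <= _).
  by rewrite ler_wpM2l.
by rewrite mulrDr addrC lerD.
Qed.

End Series.

Section Final.
Variable R : realType.
Local Notation C := R[i].
Variable H : lmodType C.
Variable ip : H -> H -> C.
Hypothesis Hip : is_inner_product ip.
Variable e : nat -> H.
Hypothesis Hon : orthonormal_basis ip e.
Hypothesis Hcomp : hcomplete ip.
Local Notation hn := (hnorm ip).
Local Notation dist := (distL ip e).
Local Notation S := (H_ra ip e).
Local Notation Q := (q ip e).
Local Notation Ss := (@s_space R).
Local Notation sn := (@s_norm R).
Local Notation cf := (coef ip e).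

Lemma coef_lin a x y : cf (a *: x + y) = a *: cf x + cf y.
Proof. by apply: funext => n; rewrite /coef (ipDl Hip). Qed.

Lemma coef_sub x y : cf (x - y) = cf x - cf y.
Proof. by apply: funext => n; rewrite /coef (ipB Hip). Qed.

Lemma S_coef x : S x -> Ss (cf x).
Proof.
move=> hx k; apply: (bnd_of_le (M := Q k x)) => n.
apply: le_trans (Q_ub k n hx).
by rewrite ler_wpM2l ?wt_ge0 // (coef_le_dist Hip Hon).
Qed.

Lemma sn_le_Q x k : S x -> sn k (cf x) <= Q k x.
Proof.
move=> hx; apply: (supr_le (f := fun n => wt R n k * cabs (cf x n))) => n.
apply: le_trans (Q_ub k n hx).
by rewrite ler_wpM2l ?wt_ge0 // (coef_le_dist Hip Hon).
Qed.

Lemma coef_S x : Ss (cf x) -> S x.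
Proof.
move=> ha; apply: S_of_bound => k; exists (2 * Bk (cf x) k) => n.
exact: (main_bnd Hip Hon Hcomp).
Qed.

Lemma Q_le_B x k : Ss (cf x) -> Q k x <= 2 * Bk (cf x) k.
Proof. by move=> ha; apply: Q_le => n; apply: (main_bnd Hip Hon Hcomp). Qed.

Lemma coef_gfun a : Ss a -> cf (g ip e a) = a.
Proof. by move=> ha; apply: funext => n; rewrite /coef (coef_g Hip Hon Hcomp). Qed.

Lemma g_S a : Ss a -> S (g ip e a).
Proof. by move=> ha; apply: coef_S; rewrite coef_gfun. Qed.

Lemma S_complete : sn_complete S Q.
Proof.
move=> u hu hC.
have hH : forall eps : R, 0 < eps -> exists N : nat, forall m n : nat,
    (N <= m)%N -> (N <= n)%N -> hn (u m - u n) < eps.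
  move=> eps he; have [N hN] := hC 0%N eps he; exists N => m n hm hn'.
  apply: le_lt_trans (hn_le_Q0 (S_sub Hip (hu m) (hu n))) _.
  exact: hN.
have [l hl] := Hcomp hH.
have claim : forall (k : nat) (eps : R), 0 < eps -> exists N : nat, forall n : nat,
    (N <= n)%N -> forall j, wt R j k * dist (u n - l) j <= eps.
  move=> k eps he; have [N hN] := hC k eps he; exists N => n hn' j.
  apply/ler_addgt0Pr => d hd.
  have hw := wt_ge0 R j k.
  have hd' : 0 < d / (wt R j k + 1) by rewrite divr_gt0 // ltr_wpDl.
  have [M hM] := hl _ hd'.
  set m := maxn N M.
  have h1 := hN n m hn' (leq_maxl _ _).
  have h2 := hM m (leq_maxr _ _).
  have h3 : dist (u n - l) j <= dist (u n - u m) j + hn (u m - l).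
    apply: le_trans (_ : dist (u n - u m) j + dist (u m - l) j <= _).
      by have := distD Hip e (u n - u m) (u m - l) j; rewrite addrA subrK.
    by rewrite lerD2l dist_le_hn.
  have h4 : wt R j k * dist (u n - u m) j <= Q k (u n - u m).
    by apply: Q_ub; apply: (S_sub Hip).
  have h5 : wt R j k * hn (u m - l) <= d.
    apply: le_trans (_ : wt R j k * (d / (wt R j k + 1)) <= _).
      by rewrite ler_wpM2l // ltW.
    rewrite mulrA ler_pdivrMr ?ltr_wpDl // mulrC ler_wpM2l ?ltW //; lra.
  apply: le_trans (_ : wt R j k * (dist (u n - u m) j + hn (u m - l)) <= _).
    by rewrite ler_wpM2l.
  rewrite mulrDr; apply: lerD; last exact: h5.
  by apply: le_trans h4 _; exact: ltW.
have hl' : S l.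
  apply: S_of_bound => k; have [N hN] := claim k 1 ltr01.
  exists (Q k (u N) + 1) => j.
  have -> : l = u N - (u N - l) by rewrite opprB addrC subrK.
  apply: le_trans (_ : wt R j k * (dist (u N) j + dist (u N - l) j) <= _).
    by rewrite ler_wpM2l ?wt_ge0 //; exact: distB.
  by rewrite mulrDr lerD ?Q_ub ?hN.
exists l => // k eps he.
have he2 : 0 < eps / 2 by rewrite divr_gt0.
have [N hN] := claim k _ he2; exists N => n hn'.
apply: le_lt_trans (_ : eps / 2 < eps); last by lra.
by apply: Q_le; apply: hN.
Qed.

Lemma coef_cont : sn_continuous S Q Ss sn cf.
Proof.
move=> U [hUS hU]; split; first by move=> x [].
move=> x [hx hUx]; have [k [eps [he hball]]] := hU _ hUx.
exists k, eps; split => // y [hy hyk]; split => //.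
apply: hball; split; first exact: S_coef.
move=> j hj; rewrite -coef_sub; apply: le_lt_trans (sn_le_Q _ _) (hyk j hj).
exact: (S_sub Hip).
Qed.

Lemma g_cont : sn_continuous Ss sn S Q (g ip e).
Proof.
move=> U [hUS hU]; split; first by move=> x [].
move=> b0 [hb0 hUb0]; have [k [eps [he hball]]] := hU _ hUb0.
exists (k + 2)%N, (eps / 8); split; first by rewrite divr_gt0.
move=> b [hb hbk]; split => //.
apply: hball; split; first exact: g_S.
move=> j hj.
have hd : Ss (b - b0).
  have -> : b - b0 = cf (g ip e b - g ip e b0) by rewrite coef_sub !coef_gfun.
  by apply: S_coef; apply: (S_sub Hip); apply: g_S.
have hz : cf (g ip e b - g ip e b0) = b - b0 by rewrite coef_sub !coef_gfun.
apply: le_lt_trans (Q_le_B _ _) _; first by rewrite hz.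
rewrite hz /Bk.
have h0 := hbk j (leq_trans hj (leq_addr _ _)).
have h1 := hbk (j + 1)%N (leq_add hj (isT : (1 <= 2)%N)).
have h2 := hbk (j + 2)%N (leq_add hj (leqnn 2)).
lra.
Qed.

End Final.

Theorem theorem2p2 (R : realType) (H : lmodType R[i]) (ip : H -> H -> R[i])
  (e : nat -> H) :
  is_hilbert ip -> orthonormal_basis ip e ->
  [/\ frechet_seminorms (H_ra ip e) (q ip e),
      (forall x : H, H_ra ip e x <-> @s_space R (coef ip e x)) &
      top_iso (H_ra ip e) (q ip e) (@s_space R) (@s_norm R) (coef ip e)].
Proof.
move=> [Hip Hcomp] Hon.
split.
- split.
  + by split; [apply: (S0 Hip) | move=> a x y hx hy; apply: (S_lin Hip)].
  + move=> k; split.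
    * by move=> x hx; apply: Q_ge0.
    * by move=> x y hx hy; apply: (Q_add Hip).
    * by move=> a x hx; apply: (Q_scale Hip).
  + by move=> x hx h; apply: (Q_sep Hip).
  + exact: (S_complete Hip (e := e) Hcomp).
- move=> x; split; first exact: (S_coef Hip Hon).
  exact: (coef_S Hip Hon Hcomp).
- split.
  + exact: (S_coef Hip Hon).
  + by move=> a x y _ _; apply: (coef_lin Hip e).
  + exact: (coef_cont Hip Hon).
  + exists (g ip e); split.
    * exact: (g_S Hip Hon Hcomp).
    * by move=> x hx; apply: (g_coef Hip Hon Hcomp); apply: (S_coef Hip Hon).
    * exact: (coef_gfun Hip Hon Hcomp).
    * exact: (g_cont Hip Hon Hcomp).
Qed.
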